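(* Let $s\ge 1$, $q=4^{2s}$, and let $\theta$ be the automorphism of $F_q$ given by $\theta(a)=a^{4^s}$. Let $n$ be odd and suppose $x^n-1=h(x)g(x)$ in $F_q[x;\theta]$. Then the skew cyclic code $C=\langle g(x)\rangle$ of length $n$ over $F_q$ is a reversible DNA code if and only if $g(x)$ is a palindromic polynomial.
   Context: $F_q[x;\theta]$ is the skew polynomial ring: polynomials $\sum a_ix^i$ with $a_i\in F_q$, usual addition, and multiplication determined by $xa=\theta(a)x$ for $a\in F_q$. A skew cyclic code of length $n$ is a linear code $C\subseteq F_q^n$ such that $(\theta(c_{n-1}),\theta(c_0),\ldots,\theta(c_{n-2}))\in C$ whenever $(c_0,\ldots,c_{n-1})\in C$; identifying $(c_0,\ldots,c_{n-1})$ with $c_0+c_1x+\dots+c_{n-1}x^{n-1}$, such codes are left $F_q[x;\theta]$-submodules of $F_q[x;\theta]/(x^n-1)$, and $\langle g(x)\rangle$ denotes the left submodule generated by $g(x)$. A polynomial $f(x)=a_0+\dots+a_tx^t$ of degree $t$ is palindromic if $a_i=a_{t-i}$ for all $i$. DNA correspondence: there is a fixed bijection $\tau:F_{4^{2s}}\to\{A,T,G,C\}^{2s}$ such that for every $\beta$, $\tau(\beta^{4^s})$ is the reverse of the string $\tau(\beta)$; it extends to $\phi:F_q^n\to\{A,T,G,C\}^{2sn}$ by concatenation. A code $C\subseteq F_q^n$ is a reversible DNA code if the reverse string $\phi(c)^r$ lies in $\phi(C)$ for all $c\in C$; equivalently, $(\theta(c_{n-1}),\ldots,\theta(c_1),\theta(c_0))\in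 C$ for every $(c_0,\ldots,c_{n-1})\in C$. *)

(* Defs.v *)
From HB Require Import structures.
From mathcomp Require Import all_boot all_order all_algebra all_field.
Set Implicit Arguments. Unset Strict Implicit. Unset Printing Implicit Defensive.
Import GRing.Theory.
Local Open Scope ring_scope.

Definition frob {F : finFieldType} (s : nat) (a : F) : F := a ^+ (4 ^ s).

(* Skew polynomial ring F[x; theta]: elements are represented by their
   coefficient sequences (the carrier {poly F}, addition as usual), and the
   multiplication is determined by x a = theta(a) x, i.e.
   (sum a_i x^i)(sum b_j x^j) = sum a_i theta^i(b_j) x^(i+j). *)
Definition skew_mul (F : fieldType) (theta : F -> F) (f g : {poly F}) : {poly F} :=
  \sum_(i < size f) \sum_(j < size g) (f`_i * iter i theta g`_j) *: 'X^(i + j).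

Definition word_poly (F : fieldType) (n : nat) (c : 'rV[F]_n) : {poly F} :=
  \sum_(i < n) c 0 i *: 'X^i.

(* The left F[x;theta]-submodule <g> of F[x;theta]/(x^n - 1) (quotient by the
   left ideal generated by x^n - 1), viewed as a set of words of length n:
   c is in the code iff its class equals the class of f * g for some f. *)
Definition skew_code (F : fieldType) (theta : F -> F) (n : nat) (g : {poly F})
  (c : 'rV[F]_n) : Prop :=
  exists f q : {poly F},
    word_poly c = skew_mul theta f g + skew_mul theta q ('X^n - 1).

(* Reversible DNA code (theta-form): (c_0,...,c_{n-1}) in C implies
   (theta c_{n-1}, ..., theta c_1, theta c_0) in C. *)
Definition reversible (F : fieldType) (theta : F -> F) (n : nat)
  (C : 'rV[F]_n -> Prop) : Prop :=
  forall c, C c -> C (\row_(i < n) theta (c 0 (rev_ord i))).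

Definition palindromic (F : fieldType) (f : {poly F}) : Prop :=
  forall i : nat, (i <= (size f).-1)%N -> f`_i = f`_((size f).-1 - i).

Arguments skew_code {F} theta n g c.
Arguments reversible {F} theta n C.

(* Main.v *)
Require Import Defs.
From HB Require Import structures.
From mathcomp Require Import all_boot all_order all_algebra all_field.
From mathcomp Require Import zify ring.
Set Implicit Arguments. Unset Strict Implicit. Unset Printing Implicit Defensive.
Import GRing.Theory.
Local Open Scope ring_scope.

Section Skew.
Variable F : fieldType.
Variable th : F -> F.
Hypothesis thD : forall x y, th (x + y) = th x + th y.
Hypothesis thM : forall x y, th (x * y) = th x * th y.
Hypothesis th1 : th 1 = 1.
Hypothesis thK : forall x, th (th x) = x.

Lemma th0 : th 0 = 0.
Proof.
by apply: (addrI (th 0)); rewrite -thD !addr0.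
Qed.

Lemma thN x : th (- x) = - th x.
Proof.
by apply/eqP; rewrite -subr_eq0 opprK -thD addNr th0.
Qed.

Lemma th_eq0 x : (th x == 0) = (x == 0).
Proof.
apply/eqP/eqP => [h|->]; last exact: th0.
by rewrite -(thK x) h th0.
Qed.

Notation t i := (iter i th).

Lemma t0 i : t i 0 = 0.
Proof. by elim: i => //= i ->; rewrite th0. Qed.
Lemma tD i x y : t i (x + y) = t i x + t i y.
Proof. by elim: i => //= i ->; rewrite thD. Qed.
Lemma tM i x y : t i (x * y) = t i x * t i y.
Proof. by elim: i => //= i ->; rewrite thM. Qed.
Lemma t_eq0 i x : (t i x == 0) = (x == 0).
Proof. by elim: i => //= i <-; rewrite th_eq0. Qed.
Lemma t_even m x : t m.*2 x = x.
Proof. by elim: m => // m IH; rewrite doubleS /= thK IH. Qed.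
Lemma t_odd m x : odd m -> t m x = th x.
Proof.
move=> om; rewrite -(odd_double_half m) om add1n /= t_even //.
Qed.

Definition tw i (p : {poly F}) := \poly_(j < size p) t i p`_j.
Lemma coef_tw i p j : (tw i p)`_j = t i p`_j.
Proof.
rewrite coef_poly; case: ltnP => // h.
by rewrite nth_default // t0.
Qed.

Notation sm := (skew_mul th).

Lemma smE (f g : {poly F}) : sm f g = \sum_(i < size f) f`_i *: ('X^i * tw i g).
Proof.
rewrite /skew_mul; apply: eq_bigr => i _.
rewrite /tw poly_def mulr_sumr scaler_sumr; apply: eq_bigr => j _.
by rewrite -scalerAr scalerA exprD.
Qed.

Lemma smEN N (f g : {poly F}) : (size f <= N)%N ->
  sm f g = \sum_(i < N) f`_i *: ('X^i * tw i g).
Proof.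
move=> hN; rewrite smE.
rewrite -(big_mkord xpredT (fun i => f`_i *: ('X^i * tw i g))).
rewrite -(big_mkord xpredT (fun i => f`_i *: ('X^i * tw i g))).
rewrite (@big_cat_nat _ _ _ (size f) 0 N _ _ (leq0n _) hN) /= [X in _ = _ + X]big1_seq ?addr0 //.
move=> i /andP[_]; rewrite mem_index_iota => /andP[hi _].
by rewrite nth_default // scale0r.
Qed.


Lemma smD (f1 f2 g : {poly F}) : sm (f1 + f2) g = sm f1 g + sm f2 g.
Proof.
set N := maxn (size f1) (size f2).
rewrite !(smEN (N:=N)) ?leq_maxl ?leq_maxr ?(leq_trans (size_polyD _ _)) //.
by rewrite -big_split; apply: eq_bigr => i _; rewrite coefD scalerDl.
Qed.

Lemma smZ a (f g : {poly F}) : sm (a *: f) g = a *: sm f g.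
Proof.
rewrite (smEN (N:=size f)) ?size_scale_leq // smE scaler_sumr.
by apply: eq_bigr => i _; rewrite coefZ scalerA.
Qed.

Lemma sm0 (g : {poly F}) : sm 0 g = 0.
Proof. by rewrite smE size_poly0 big_ord0. Qed.

Lemma smN (f g : {poly F}) : sm (- f) g = - sm f g.
Proof. by rewrite -scaleN1r smZ scaleN1r. Qed.

Lemma smB (f1 f2 g : {poly F}) : sm (f1 - f2) g = sm f1 g - sm f2 g.
Proof. by rewrite smD smN. Qed.

Lemma sm_sum N (G : 'I_N -> {poly F}) g :
  sm (\sum_(i < N) G i) g = \sum_(i < N) sm (G i) g.
Proof.
by apply: (big_morph (fun f => sm f g)) => [x y|]; rewrite ?smD ?sm0.
Qed.

Lemma smXn c i (g : {poly F}) : sm (c *: 'X^i) g = c *: ('X^i * tw i g).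
Proof.
rewrite smZ smE size_polyXn big_ord_recr /= coefXn eqxx scale1r big1 ?add0r //.
by move=> j _; rewrite coefXn (ltn_eqF (ltn_ord j)) scale0r.
Qed.

Lemma tw0 (g : {poly F}) : tw 0 g = g.
Proof. by apply/polyP => j; rewrite coef_tw. Qed.

Lemma smC c (g : {poly F}) : sm (c%:P) g = c *: g.
Proof.
have -> : c%:P = c *: 'X^0 by rewrite expr0 alg_polyC.
by rewrite smXn expr0 mul1r tw0.
Qed.

Lemma twD i (p q : {poly F}) : tw i (p + q) = tw i p + tw i q.
Proof. by apply/polyP => j; rewrite coefD !coef_tw coefD tD. Qed.
Lemma tw_0 i : tw i 0 = 0.
Proof. by apply/polyP => j; rewrite coef_tw !coef0 t0. Qed.
Lemma twZ i a (p : {poly F}) : tw i (a *: p) = t i a *: tw i p.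
Proof. by apply/polyP => j; rewrite coefZ !coef_tw coefZ tM. Qed.
Lemma twXM i j (p : {poly F}) : tw i ('X^j * p) = 'X^j * tw i p.
Proof.
apply/polyP => m; rewrite coef_tw !coefXnM; case: ltnP => _; rewrite ?t0 //.
by rewrite coef_tw.
Qed.
Lemma tw_sum i N (G : 'I_N -> {poly F}) :
  tw i (\sum_(j < N) G j) = \sum_(j < N) tw i (G j).
Proof.
by apply: (big_morph (tw i)) => [x y|]; rewrite ?twD ?tw_0.
Qed.
Lemma twtw i j (p : {poly F}) : tw i (tw j p) = tw (i + j) p.
Proof. by apply/polyP => m; rewrite !coef_tw iterD. Qed.

Lemma sm_shift i (p k : {poly F}) : sm ('X^i * p) k = 'X^i * sm p (tw i k).
Proof.
rewrite -{1}[p]coefK poly_def mulr_sumr sm_sum smE mulr_sumr.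
apply: eq_bigr => j _.
rewrite -scalerAr -exprD smXn -scalerAr twtw mulrA -exprD.
by rewrite (addnC j i).
Qed.

Lemma tw_sm i (g k : {poly F}) : tw i (sm g k) = sm (tw i g) (tw i k).
Proof.
rewrite smE tw_sum (smEN (N:=size g)) ?size_poly //.
apply: eq_bigr => j _.
by rewrite twZ twXM coef_tw !twtw addnC.
Qed.

Lemma sm_assoc (f g k : {poly F}) : sm f (sm g k) = sm (sm f g) k.
Proof.
rewrite [sm f g]smE sm_sum smE; apply: eq_bigr => i _.
by rewrite smZ sm_shift tw_sm.
Qed.


Lemma gt_sz (p : {poly F}) i : p`_i != 0 -> (i < size p)%N.
Proof. by rewrite ltnNge; apply: contra => /leq_sizeP H; rewrite H. Qed.

Lemma coef_sm (f g : {poly F}) m :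
  (sm f g)`_m = \sum_(i < size f) f`_i * (if (m < i)%N then 0 else t i g`_(m - i)).
Proof.
rewrite smE coef_sum; apply: eq_bigr => i _.
by rewrite coefZ coefXnM; case: ifP => _; rewrite ?coef_tw.
Qed.

Lemma size_sm (f g : {poly F}) : f != 0 -> g != 0 ->
  size (sm f g) = (size f + size g).-1.
Proof.
move=> fn0 gn0.
have hf := polySpred fn0; have hg := polySpred gn0.
set a := (size f).-1 in hf *; set k := (size g).-1 in hg *; clearbody a k.
rewrite hf hg addSn /= addnS.
apply/eqP; rewrite eqn_leq; apply/andP; split.
  apply/leq_sizeP => j hj; rewrite coef_sm big1 // => i _.
  case: ltnP => hij; rewrite ?mulr0 //.
  have gz : g`_(j - i) = 0 by apply: nth_default; have := ltn_ord i; move: (nat_of_ord i) hij => i0 hij; rewrite hf hg; lia.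
  rewrite gz.
  by rewrite t0 mulr0.
apply: gt_sz; rewrite coef_sm.
rewrite hf big_ord_recr /= big1 ?add0r.
  rewrite ltnNge leq_addr /= addKn mulf_neq0 //.
    by move: (fn0); rewrite -lead_coef_eq0 lead_coefE hf.
  by move: (gn0); rewrite t_eq0 -lead_coef_eq0 lead_coefE hg.
move=> i _; case: ltnP => hi; rewrite ?mulr0 //.
have -> : g`_(a + k - i) = 0 by apply: nth_default; have := ltn_ord i; move: (nat_of_ord i) hi => i0 hi; rewrite hg; lia.
by rewrite t0 mulr0.
Qed.


Lemma sm_0r (f : {poly F}) : sm f 0 = 0.
Proof.
by rewrite smE big1 // => i _; rewrite tw_0 mulr0 scaler0.
Qed.

Lemma tw_fix i (q : {poly F}) : (forall j, th q`_j = q`_j) -> tw i q = q.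
Proof.
move=> hq; apply/polyP => j; rewrite coef_tw.
by elim: i => //= i ->; rewrite hq.
Qed.

Lemma sm_fix (p q : {poly F}) : (forall j, th q`_j = q`_j) -> sm p q = p * q.
Proof.
move=> hq; rewrite smE.
under eq_bigr => i _ do rewrite tw_fix // scalerAl.
by rewrite -mulr_suml -poly_def coefK.
Qed.

Variable n : nat.
Hypothesis n_odd : odd n.
Hypothesis two0 : (1 : F) + 1 = 0.
Variables h g : {poly F}.
Hypothesis hhg : 'X^n - 1 = sm h g.

Lemma negid (z : F) : - z = z.
Proof.
apply/eqP; rewrite eq_sym -subr_eq0 opprK.
by rewrite -{1 2}[z]mulr1 -mulrDr two0 mulr0.
Qed.

Lemma n_gt0 : (0 < n)%N.
Proof. by case: n n_odd. Qed.

Lemma size_Xn1 : size ('X^n - 1 : {poly F}) = n.+1.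
Proof. by rewrite -polyC1 size_XnsubC // n_gt0. Qed.

Lemma g_neq0 : g != 0.
Proof.
apply/eqP => g0; move: size_Xn1; rewrite hhg g0 sm_0r size_poly0.
by [].
Qed.

Lemma h_neq0 : h != 0.
Proof.
apply/eqP => h0; move: size_Xn1; rewrite hhg h0 sm0 size_poly0.
by [].
Qed.

Lemma g0_neq0 : g`_0 != 0.
Proof.
apply/negP => /eqP g00.
have : ('X^n - 1 : {poly F})`_0 = 0.
  rewrite hhg coef_sm big1 // => i _; case: ltnP => hi; rewrite ?mulr0 //.
  by rewrite sub0n g00 t0 mulr0.
rewrite coefB coefXn coef1 eqxx /=.
have -> : (0 == n) = false by apply/negbTE; rewrite eq_sym -lt0n n_gt0.
by rewrite sub0r => /eqP; rewrite oppr_eq0 oner_eq0.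
Qed.

Lemma size_hg : n.+1 = (size h + size g).-1.
Proof. by rewrite -size_Xn1 hhg size_sm // ?h_neq0 ?g_neq0. Qed.

Lemma mu1 : exists mu, forall b, th g`_b = mu * g`_b.
Proof.
pose gt := tw 1 g.
have e1 : sm 'X^n g = 'X^n * gt.
  rewrite -{1}(scale1r 'X^n) smXn scale1r; congr (_ * _).
  by apply/polyP => j; rewrite /gt !coef_tw t_odd.
have fixX : forall j, th ('X^n - 1 : {poly F})`_j = ('X^n - 1 : {poly F})`_j.
  move=> j; rewrite coefB coefXn coef1.
  by case: (j == n); case: (j == 0); rewrite /= ?subrr ?subr0 ?sub0r ?th0 ?thN ?th1.
have e2 : gt = sm ('X^n - sm gt h) g.
  rewrite smB e1 -sm_assoc -hhg sm_fix //.
  by rewrite mulrBr mulr1 mulrC opprB addrC subrK.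
have gt0 : gt`_0 != 0 by rewrite coef_tw /= th_eq0 g0_neq0.
set u := 'X^n - sm gt h in e2.
have un0 : u != 0.
  by apply/eqP => u0; move: gt0; rewrite e2 u0 sm0 coef0 eqxx.
have : (size gt <= size g)%N by apply: size_poly.
rewrite {1}e2 size_sm // ?g_neq0 //.
have := polySpred g_neq0.
move=> hs hle.
have su : (size u <= 1)%N.
  move: hle; rewrite hs addnS /=; move: (size u) ((size g).-1) => a b; lia.
have eu := size1_polyC su.
move: (u`_0) eu => c eu.
exists c => b.
have := congr1 (fun p : {poly F} => p`_b) e2.
by rewrite /= {1}/gt coef_tw eu smC coefZ.
Qed.

Definition mu j := t j g`_0 / g`_0.

Lemma muP j b : t j g`_b = mu j * g`_b.
Proof.
have [m hm] := mu1.
have key : forall j, exists c, forall b, t j g`_b = c * g`_b.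
  elim=> [|j' [c hc]]; first by exists 1 => b'; rewrite mul1r.
  by exists (th c * m) => b'; rewrite /= hc thM hm mulrA.
have [c hc] := key j.
rewrite /mu hc (hc 0) mulfK ?g0_neq0 //.
Qed.

Lemma mu_neq0 j : mu j != 0.
Proof. by rewrite /mu mulf_neq0 ?invr_eq0 ?t_eq0 ?g0_neq0. Qed.


Definition inC (p : {poly F}) := exists f, p = sm f g.
Definition revp (p : {poly F}) : {poly F} := \poly_(i < n) th p`_(n - i.+1).

Lemma coef_revp (p : {poly F}) m : (revp p)`_m = if (m < n)%N then th p`_(n - m.+1) else 0.
Proof. by rewrite coef_poly. Qed.

Lemma revpD (p q : {poly F}) : revp (p + q) = revp p + revp q.
Proof.
apply/polyP => m; rewrite coefD !coef_revp coefD.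
by case: ifP; rewrite ?thD ?addr0.
Qed.

Lemma revpZ a (p : {poly F}) : revp (a *: p) = th a *: revp p.
Proof.
apply/polyP => m; rewrite coefZ !coef_revp coefZ.
by case: ifP; rewrite ?thM ?mulr0.
Qed.

Lemma revp0 : revp 0 = 0.
Proof. by apply/polyP => m; rewrite coef_revp !coef0; case: ifP; rewrite ?th0. Qed.

Lemma revp_sum N (G : 'I_N -> {poly F}) :
  revp (\sum_(i < N) G i) = \sum_(i < N) revp (G i).
Proof.
by apply: (big_morph revp) => [x y|]; rewrite ?revpD ?revp0.
Qed.

Lemma gz j : ((size g).-1 < j)%N -> g`_j = 0.
Proof.
move=> hj; apply: nth_default; move: hj.
by rewrite (polySpred g_neq0).
Qed.

Lemma rev_key i : (i + (size g).-1 < n)%N ->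
  palindromic g ->
  revp ('X^i * tw i g) =
  sm ((mu i.+1 / mu (n - ((size g).-1).+1 - i)) *: 'X^(n - ((size g).-1).+1 - i)) g.
Proof.
set k := (size g).-1 => hik pal.
set e := (n - k.+1 - i)%N.
have gz' := gz; rewrite -/k in gz'.
apply/polyP => m; rewrite smXn coefZ coef_revp !coefXnM coef_tw.
case: (ltnP m n) => hmn.
  case: (ltnP (n - m.+1) i) => h1.
    rewrite th0; case: (ltnP m e) => h2; rewrite ?mulr0 //.
    by rewrite coef_tw gz' ?t0 ?mulr0 //; rewrite /e; lia.
  rewrite coef_tw -[th _]/(t i.+1 _) muP.
  case: (ltnP m e) => h2.
    by rewrite gz' ?mulr0 //; rewrite /e in h2; lia.
  rewrite muP mulrA mulfVK ?mu_neq0 //.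
  have hk : (m - e <= k)%N by rewrite /e; lia.
  rewrite (pal _ hk) -/k; congr (_ * g`_ _).
  rewrite /e; lia.
case: (ltnP m e) => h2; rewrite ?mulr0 //.
by rewrite coef_tw gz' ?t0 ?mulr0 //; rewrite /e; lia.
Qed.


Lemma pal_rev : palindromic g ->
  forall p : {poly F}, (size p <= n)%N -> inC p -> inC (revp p).
Proof.
move=> pal p hp [f ep]; subst p.
have hs := polySpred g_neq0.
set k := (size g).-1 in hs *.
have hf : (size f <= n - k)%N.
  case: (eqVneq f 0) => [->|fn0]; first by rewrite size_poly0.
  move: hp; rewrite size_sm // ?g_neq0 // hs addnS /=.
  move: (size f) => a; lia.
rewrite (smEN (N:=n-k)) // revp_sum.
exists (\sum_(i < n - k) th f`_i *: ((mu i.+1 / mu (n - k.+1 - i)) *: 'X^(n - k.+1 - i))).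
rewrite sm_sum; apply: eq_bigr => i _.
rewrite revpZ rev_key // ?smZ //.
by have := ltn_ord i; move: (nat_of_ord i) => i0; lia.
Qed.

Lemma rev_pal : (forall p : {poly F}, (size p <= n)%N -> inC p -> inC (revp p)) ->
  palindromic g.
Proof.
move=> Rv.
have hs := polySpred g_neq0.
have gk : g`_(size g).-1 != 0 by rewrite -lead_coefE lead_coef_eq0 g_neq0.
set k := (size g).-1 in hs gk *.
rewrite /palindromic -/k.
have ng := n_gt0.
have hkn : (k <= n)%N.
  have := size_hg; have : (0 < size h)%N by rewrite lt0n size_poly_eq0 h_neq0.
  rewrite hs; move: (size h) => a; lia.
case: (ltnP k n) => hkn'.
  have [f ef] : inC (revp g).
    apply: Rv; first by rewrite hs.
    by exists 1; rewrite -polyC1 smC scale1r.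
  set d := (n - k.+1)%N.
  have fn0 : f != 0.
    apply/eqP => f0; move: ef; rewrite f0 sm0 => r0.
    have := coef_revp g d; rewrite r0 coef0 ifT; last by rewrite /d; lia.
    have -> : (n - d.+1 = k)%N by rewrite /d; lia.
    by move/esym/eqP; rewrite th_eq0 (negbTE gk).
  have sf : (size f <= d.+1)%N.
    have := size_poly n (fun i => th g`_(n - i.+1)).
    rewrite -/(revp g) ef size_sm // ?g_neq0 // hs addnS /=.
    rewrite /d; move: (size f) => a; lia.
  have low : forall m, (m <= d)%N -> forall j, (j < m)%N -> f`_j = 0.
    elim=> [|m IH] hm j hj; first by [].
    have IH' := IH (ltnW hm).
    case: (ltnP j m) => hjm; first exact: IH'.
    have -> : j = m by lia.
    case: (ltnP m (size f)) => hmf; last by rewrite nth_default.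
    have cm : (revp g)`_m = 0.
      rewrite coef_revp ifT; last by rewrite /d in hm; lia.
      by rewrite gz ?th0 // -/k; rewrite /d in hm; lia.
    have := congr1 (fun p : {poly F} => p`_m) ef.
    rewrite /= cm coef_sm (bigD1 (Ordinal hmf)) //= ltnn subnn big1 ?addr0.
      move/esym/eqP; rewrite mulf_eq0 t_eq0 (negbTE g0_neq0) orbF.
      by move/eqP.
    move=> i hi.
    have hi' : (nat_of_ord i != m).
      by apply: contra hi => /eqP e; apply/eqP/val_inj.
    case: ltnP => h3; rewrite ?mulr0 //.
    rewrite IH' ?mul0r //; lia.
  have ef' : f = f`_d *: 'X^d.
    apply/polyP => m; rewrite coefZ coefXn.
    case: (ltngtP m d) => h4.
    - by rewrite mulr0 (low d (leqnn d) m h4).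
    - by rewrite mulr0 nth_default // (leq_trans sf h4).
    - by rewrite h4 mulr1.
  move: (f`_d) ef' => c ef'.
  have key : forall j, (j <= k)%N -> g`_(k - j) = th (c * mu d) * mu 1 * g`_j.
    move=> j hj.
    have := congr1 (fun p : {poly F} => p`_(d + j)) ef.
    rewrite /= coef_revp ef' smXn coefZ coefXnM coef_tw ifT; last by rewrite /d; lia.
    rewrite ltnNge leq_addr /= addKn.
    have -> : (n - (d + j).+1 = k - j)%N by rewrite /d; lia.
    rewrite muP mulrA => e.
    by rewrite -[g`_(k - j)]thK e thM -[th g`_j]/(t 1 g`_j) muP mulrA.
  move: (th (c * mu d) * mu 1) key => nu key.
  have nu1 : nu = 1.
    have e0 := key 0 (leq0n _); have ek := key k (leqnn _).
    rewrite subn0 in e0; rewrite subnn e0 mulrA in ek.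
    have : (nu * nu) * g`_0 = 1 * g`_0 by rewrite -ek mul1r.
    move/(mulIf g0_neq0) => nn.
    have : nu ^+ 2 == 1 by rewrite expr2 nn.
    by rewrite sqrf_eq1 => /orP[/eqP //| /eqP ->]; rewrite negid.
  by move=> i hi; rewrite (key i hi) nu1 mul1r.
have kn : k = n by lia.
have sh : (size h <= 1)%N.
  have := size_hg; rewrite hs kn; move: (size h) => a; lia.
have eh := size1_polyC sh.
move: (h`_0) eh => c eh.
have e : 'X^n - 1 = c *: g by rewrite hhg eh smC.
have cn0 : c != 0.
  apply/eqP => c0; move: size_Xn1; rewrite e c0 scale0r size_poly0.
  by [].
move=> i hi.
have cX j : ('X^n - 1 : {poly F})`_j = c * g`_j by rewrite e coefZ.
apply: (mulfI cn0); rewrite -!cX !coefB !coefXn !coef1.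
rewrite kn in hi *.
have -> : ((n - i)%N == n) = (i == 0%N) by apply/eqP/eqP => H; lia.
have -> : ((n - i)%N == 0%N) = (i == n) by apply/eqP/eqP => H; lia.
by rewrite !negid addrC.
Qed.


Lemma coef_word (c : 'rV[F]_n) (i : 'I_n) : (word_poly c)`_i = c 0 i.
Proof.
rewrite /word_poly coef_sum (bigD1 i) //= coefZ coefXn eqxx mulr1 big1 ?addr0 //.
move=> j hj; rewrite coefZ coefXn.
have -> : (nat_of_ord i == nat_of_ord j) = false.
  by apply/negbTE; rewrite eq_sym.
by rewrite mulr0.
Qed.

Lemma size_word (c : 'rV[F]_n) : (size (word_poly c) <= n)%N.
Proof.
apply/leq_sizeP => j hj; rewrite coef_sum big1 // => i _; rewrite coefZ coefXn.
by rewrite gtn_eqF ?mulr0 // (leq_trans (ltn_ord i) hj).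
Qed.

Lemma word_of (p : {poly F}) : (size p <= n)%N -> word_poly (\row_(i < n) p`_i) = p.
Proof.
move=> hp; apply/polyP => j; case: (ltnP j n) => hj.
  by have := coef_word (\row_(i < n) p`_i) (Ordinal hj); rewrite mxE /= => ->.
rewrite [p`_j]nth_default ?(leq_trans hp hj) //.
by move/leq_sizeP: (size_word (\row_(i < n) p`_i)); apply.
Qed.

Lemma word_rev (c : 'rV[F]_n) :
  word_poly (\row_(i < n) th (c 0 (rev_ord i))) = revp (word_poly c).
Proof.
rewrite /revp poly_def {1}/word_poly; apply: eq_bigr => i _.
by rewrite mxE -(coef_word c (rev_ord i)).
Qed.

Lemma code_iff (c : 'rV[F]_n) : skew_code th n g c <-> inC (word_poly c).
Proof.
split => [[f [q e]]|[f e]].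
  by exists (f + sm q h); rewrite e hhg sm_assoc smD.
by exists f, 0; rewrite sm0 addr0.
Qed.

Lemma main_sec : reversible th n (skew_code th n g) <-> palindromic g.
Proof.
split=> [R|pal].
  apply: rev_pal => p hp hpC.
  have h1 : skew_code th n g (\row_(i < n) p`_i) by apply/code_iff; rewrite word_of.
  by move: (R _ h1) => /code_iff; rewrite word_rev word_of.
move=> c /code_iff hc; apply/code_iff; rewrite word_rev.
by apply: pal_rev => //; exact: size_word.
Qed.

End Skew.

Lemma sq2e (F : fieldType) (two0 : (1 : F) + 1 = 0) e (x y : F) :
  (x + y) ^+ (2 ^ e) = x ^+ (2 ^ e) + y ^+ (2 ^ e).
Proof.
elim: e x y => [|e IH] x y; first by rewrite !expr1.
rewrite expnS mulnC !exprM IH sqrrD mulr2n.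
set z := x ^+ (2 ^ e) * y ^+ (2 ^ e).
have -> : z + z = 0 by rewrite -{1 2}[z]mulr1 -mulrDr two0 mulr0.
by rewrite addr0.
Qed.

Theorem theorem6 (F : finFieldType) (s n : nat) (h g : {poly F}) :
  (1 <= s)%N -> #|F| = (4 ^ (2 * s))%N -> odd n ->
  'X^n - 1 = skew_mul (frob s) h g ->
  (reversible (frob s) n (skew_code (frob s) n g) <-> palindromic g).
Proof.
move=> s1 hF no hhg.
have hc : #|F| = (2 ^ (2 * (2 * s)))%N by rewrite hF [RHS]expnM.
have ch : 2 \in [pchar F] := card_finPcharP hc (isT : prime 2).
have two0 : (1 : F) + 1 = 0.
  by move: ch => /andP[_ /eqP]; rewrite -mulr2n.
have e4 : (4 ^ s = 2 ^ (2 * s))%N by rewrite expnM.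
have fD : forall x y : F, frob s (x + y) = frob s x + frob s y.
  by move=> x y; rewrite /frob e4 sq2e.
have fM : forall x y : F, frob s (x * y) = frob s x * frob s y.
  by move=> x y; rewrite /frob exprMn.
have f1 : frob s (1 : F) = 1 by rewrite /frob expr1n.
have fK : forall x : F, frob s (frob s x) = x.
  move=> x; rewrite /frob -exprM -expnD addnn -mul2n -hF.
  exact: expf_card.
exact: (main_sec fD fM f1 fK no two0 hhg).
Qed.
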